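(* For every integer $n\ge 3$, the set $\{2,n\}$ is not a $\delta$-set.
   Context: All graphs are finite and simple; $d(u,v)$ denotes the usual graph distance (infinite between different components). For a set $J$ of nonnegative integers, a distance $J$-labeling of $G$ is a function $f:V(G)\to J$ with $f(V(G))=J$ such that whenever two distinct vertices $u,v$ satisfy $f(u)=f(v)=k$, we have $d(u,v)=k$. It is proper if every $k\in J\setminus\{0\}$ is the label of at least two vertices. A finite set $\Sigma$ of nonnegative integers is a $\delta$-set if there exists a graph admitting a proper distance $\Sigma$-labeling. *)

(* Defs.v *)
From mathcomp Require Import all_boot.
Set Implicit Arguments. Unset Strict Implicit. Unset Printing Implicit Defensive.

Definition simple_graph (T : finType) (e : rel T) : Prop :=
  symmetric e /\ irreflexive e.

Definition walk_len (T : finType) (e : rel T) (u v : T) (k : nat) : Prop :=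
  exists p : seq T, [/\ size p = k, path e u p & last u p = v].

(* If u, v lie in different
   components, d(u,v) = infinity is equal to no natural number k. *)
Definition dist_eq (T : finType) (e : rel T) (u v : T) (k : nat) : Prop :=
  walk_len e u v k /\ (forall j, j < k -> ~ walk_len e u v j).

Definition distance_labeling (T : finType) (e : rel T) (J : seq nat)
    (f : T -> nat) : Prop :=
  (forall k, k \in J <-> exists v, f v = k) /\
  (forall u v : T, u != v -> f u = f v -> dist_eq e u v (f u)).

Definition proper_distance_labeling (T : finType) (e : rel T) (J : seq nat)
    (f : T -> nat) : Prop :=
  distance_labeling e J f /\
  (forall k, k \in J -> k != 0 -> exists u v : T, [/\ u != v, f u = k & f v = k]).

Definition delta_set (Sigma : seq nat) : Prop :=
  exists (T : finType) (e : rel T), simple_graph e /\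
    exists f : T -> nat, proper_distance_labeling e Sigma f.

(* Main.v *)
Require Import Defs.
From mathcomp Require Import all_boot.

Theorem mainTheorem11 (n : nat) : 3 <= n -> ~ delta_set [:: 2; n].
Proof.
move=> n3 [T [e [[esy eirr] [f [[Hlab Hd] Hpr]]]]].
have nin : n \in [:: 2; n] by rewrite !inE eqxx orbT.
have n0 : n != 0 by case: (n) n3.
have [u [v [uv fu fv]]] := Hpr n nin n0.
have [[p [sp pp lp]] pmin] := Hd u v uv (etrans fu (esym fv)).
rewrite fu in pmin.
rewrite fu in sp.
case: p sp pp lp => [|a [|b q]] //= sp; first by move=> *; rewrite -sp in n3.
  by move=> *; rewrite -sp in n3.
case/and3P=> ua ab bq lp.
have lab x : f x = 2 \/ f x = n.
  have : f x \in [:: 2; n] by apply/Hlab; exists x.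
  by rewrite !inE => /orP [] /eqP; auto.
have notn x i j : i < n -> j < n -> walk_len e u x i -> walk_len e x v j -> f x <> n.
  move=> hi hj wi wj fx.
  case: (eqVneq x u) => [xu|xu].
    by subst x; apply: (pmin j hj).
  have [_ m] := Hd x u xu (etrans fx (esym fu)).
  rewrite fx in m.
  apply: (m i hi).
  case: wi => s [ss ps ls].
  exists (rev (belast u s)); split.
  - by rewrite size_rev size_belast.
  - by rewrite -ls rev_path; apply: sub_path ps => y z /=; rewrite esy.
  - case: s ss ps ls => [|y s] /= _ _ ls; first by rewrite ls.
    by rewrite rev_cons last_rcons.
have fa : f a = 2.
  case: (lab a) => // h; exfalso; apply: (notn a 1 (size q).+1) => //.
  - by apply: leq_trans n3; rewrite ltnS.
  - by rewrite -sp.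
  - by exists [:: a]; rewrite /= ua.
  - by exists (b :: q); rewrite /= ab bq lp.
have fb : f b = 2.
  case: (lab b) => // h; exfalso; apply: (notn b 2 (size q)) => //.
  - by rewrite -sp ltnW.
  - by exists [:: a; b]; rewrite /= ua ab.
  - by exists q.
have abn : a != b by apply/eqP => h; subst b; rewrite eirr in ab.
have [_ m] := Hd a b abn (etrans fa (esym fb)).
rewrite fa in m.
by apply: (m 1 isT); exists [:: b]; rewrite /= ab.
Qed.
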